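(* Let $P_2$ have vertices $u,v$ and $P_3$ have vertices $1,2,3$ (with $2$ the middle vertex). Then the Cartesian product $P_2\square P_3$ has pretty good state transfer both between $(u,1)$ and $(u,3)$ and between $(u,1)$ and $(v,1)$, although $(u,3)\neq(v,1)$.
   Context: $P_m$ denotes the path on $m$ vertices. The transition matrix of a graph with adjacency matrix $A$ is $H(t)=\exp(-itA)$. The Cartesian product $G_1\square G_2$ has vertex set $V(G_1)\times V(G_2)$, with $(u_1,u_2)\sim(v_1,v_2)$ iff either $u_1\sim v_1$ and $u_2=v_2$, or $u_1=v_1$ and $u_2\sim v_2$. A graph has pretty good state transfer between vertices $x$ and $y$ if for every $\epsilon>0$ there is $t\in\mathbb R$ with $\big||e_x^TH(t)e_y|-1\big|<\epsilon$. *)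

(* Defs.v *)
From Stdlib Require Import Reals Arith List.
Open Scope R_scope.

(* A finite graph: a type of vertices, the list of its vertices (without
   repetition), decidable equality, and a boolean adjacency relation. *)
Record graph := Graph {
  vtx : Type;
  verts : list vtx;
  vdec : forall x y : vtx, {x = y} + {x <> y};
  adj : vtx -> vtx -> bool
}.

Definition path_graph (m : nat) : graph :=
  Graph nat (seq 1 m) Nat.eq_dec
        (fun i j => orb (Nat.eqb (S i) j) (Nat.eqb (S j) i)).

Definition pair_dec (G1 G2 : graph) :
  forall x y : vtx G1 * vtx G2, {x = y} + {x <> y}.
Proof.
  intros [a b] [c d].
  destruct (vdec G1 a c) as [Hac|Hac]; destruct (vdec G2 b d) as [Hbd|Hbd];
    [left; subst; reflexivity | right | right | right];
    intro H; inversion H; contradiction.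
Defined.

Definition dec_to_bool {A : Type} {x y : A} (d : {x = y} + {x <> y}) : bool :=
  if d then true else false.

Definition cart (G1 G2 : graph) : graph :=
  Graph (vtx G1 * vtx G2) (list_prod (verts G1) (verts G2)) (pair_dec G1 G2)
        (fun p q =>
           orb (andb (adj G1 (fst p) (fst q)) (dec_to_bool (vdec G2 (snd p) (snd q))))
               (andb (dec_to_bool (vdec G1 (fst p) (fst q))) (adj G2 (snd p) (snd q)))).

Definition adjR (G : graph) (x y : vtx G) : R := if adj G x y then 1 else 0.

Fixpoint apow (G : graph) (k : nat) (x y : vtx G) : R :=
  match k with
  | O => if vdec G x y then 1 else 0
  | S k' => fold_right Rplus 0 (map (fun z => adjR G x z * apow G k' z y) (verts G))
  end.

(* Real and imaginary parts of (-i)^k. *)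
Definition re_negi_pow (k : nat) : R :=
  match Nat.modulo k 4 with 0%nat => 1 | 2%nat => -1 | _ => 0 end.
Definition im_negi_pow (k : nat) : R :=
  match Nat.modulo k 4 with 1%nat => -1 | 3%nat => 1 | _ => 0 end.

(* H(t) = exp(-itA) = sum_k (-it)^k A^k / k!.  [H_entry G t x y a b] says that
   the (x,y) entry of H(t), i.e. e_x^T H(t) e_y, equals a + i b: the real and
   imaginary parts of the exponential series converge to a and b. *)
Definition H_entry (G : graph) (t : R) (x y : vtx G) (a b : R) : Prop :=
  infinite_sum (fun k => re_negi_pow k * t ^ k / INR (fact k) * apow G k x y) a /\
  infinite_sum (fun k => im_negi_pow k * t ^ k / INR (fact k) * apow G k x y) b.

Definition PGST (G : graph) (x y : vtx G) : Prop :=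
  forall eps : R, eps > 0 ->
    exists t a b : R, H_entry G t x y a b /\ Rabs (sqrt (a ^ 2 + b ^ 2) - 1) < eps.

(* Main.v *)
Require Import Defs.
From Stdlib Require Import Reals Arith List Lra Lia Nsatz.
Open Scope R_scope.

Definition G := cart (path_graph 2) (path_graph 3).
Definition s := sqrt 2.
Lemma s2 : s * s = 2. Proof. apply sqrt_sqrt; lra. Qed.

Definition al (m : bool) (a : nat) : R := if m then 1 else (if Nat.eqb a 1 then 1 else -1).
Definition be (n : nat) (b : nat) : R :=
  match n with
  | O => match b with 2%nat => s | _ => 1 end
  | 1%nat => match b with 1%nat => 1 | 3%nat => -1 | _ => 0 end
  | _ => match b with 2%nat => -s | _ => 1 end end.
Definition nf (n : nat) : R := match n with 1%nat => /4 | _ => /8 end.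
Definition lam (m : bool) (n : nat) : R :=
  (if m then 1 else -1) + match n with O => s | 1%nat => 0 | _ => -s end.
Definition trm (m : bool) (n : nat) (k : nat) (x y : nat * nat) : R :=
  nf n * al m (fst x) * al m (fst y) * be n (snd x) * be n (snd y) * lam m n ^ k.
Definition F (k : nat) (x y : nat*nat) : R :=
  trm true 0 k x y + trm true 1 k x y + trm true 2 k x y +
  trm false 0 k x y + trm false 1 k x y + trm false 2 k x y.

Lemma fold_ext (A : Type) (f g : A -> R) (l : list A) :
  (forall z, In z l -> f z = g z) ->
  fold_right Rplus 0 (map f l) = fold_right Rplus 0 (map g l).
Proof.
  induction l; simpl; intros; auto.
  rewrite H, IHl; auto.
Qed.

Lemma verts_G : verts G = ((1,1)::(1,2)::(1,3)::(2,1)::(2,2)::(2,3)::nil)%nat.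
Proof. reflexivity. Qed.

Lemma apow_closed : forall k x y, In x (verts G) -> In y (verts G) -> apow G k x y = F k x y.
Proof.
  assert (H8 : 8 * / 8 = 1) by (field; lra).
  assert (H4 : 4 * / 4 = 1) by (field; lra).
  pose proof s2. assert (H2 : s^2 = 2) by (rewrite <- H; ring).
  assert (H3 : s^3 = 2*s) by (rewrite <- H; ring).
  induction k; intros x y Hx Hy.
  - rewrite verts_G in Hx, Hy. unfold F, trm, nf, al, be, lam; simpl.
    destruct Hx as [<-|[<-|[<-|[<-|[<-|[<-|[]]]]]]];
    destruct Hy as [<-|[<-|[<-|[<-|[<-|[<-|[]]]]]]]; simpl; nsatz.
  - change (apow G (S k) x y) with (fold_right Rplus 0 (map (fun z => adjR G x z * apow G k z y) (verts G))). rewrite (fold_ext _ _ (fun z => adjR G x z * F k z y)).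
    2:{ intros z Hz. rewrite IHk; auto. }
    rewrite verts_G in Hx.
    destruct Hx as [<-|[<-|[<-|[<-|[<-|[<-|[]]]]]]]; unfold adjR, G; simpl; unfold F, trm, nf, al, be, lam; simpl.
    all: field_simplify; rewrite ?H2, ?H3; field.
Qed.

Lemma negi4 k : re_negi_pow (k + 4) = re_negi_pow k /\ im_negi_pow (k+4) = im_negi_pow k.
Proof.
  unfold re_negi_pow, im_negi_pow.
  replace (k+4)%nat with (k + 1*4)%nat by lia. rewrite Nat.Div0.mod_add. auto.
Qed.

Definition Pn (i : nat) : Prop :=
  re_negi_pow (2*i) = (-1)^i /\ re_negi_pow (2*i+1) = 0 /\
  im_negi_pow (2*i) = 0 /\ im_negi_pow (2*i+1) = - (-1)^i.

Lemma negi_par i : Pn i.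
Proof.
  assert (forall i, Pn i /\ Pn (S i)).
  { induction i0.
    - unfold Pn, re_negi_pow, im_negi_pow; simpl; repeat split; ring.
    - destruct IHi0 as [IH0 IH]. split; [exact IH|].
      destruct IH0 as [E1 [E2 [E3 E4]]]. unfold Pn.
      replace (2 * S (S i0))%nat with (2 * i0 + 4)%nat by lia.
      replace (2 * i0 + 4 + 1)%nat with (2 * i0 + 1 + 4)%nat by lia.
      destruct (negi4 (2*i0)) as [A B]. destruct (negi4 (2*i0+1)) as [C D].
      rewrite A, B, C, D, E1, E2, E3, E4. simpl. repeat split; ring. }
  apply H.
Qed.

Lemma sum_even (f g : nat -> R) :
  (forall i, f (2*i)%nat = g i) -> (forall i, f (2*i+1)%nat = 0) ->
  forall n, sum_f_R0 f (2*n) = sum_f_R0 g n /\ sum_f_R0 f (2*n+1) = sum_f_R0 g n.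
Proof.
  intros Hf Hz. induction n.
  - pose proof (Hf 0%nat); pose proof (Hz 0%nat). simpl in *. split; lra.
  - destruct IHn as [_ IH].
    replace (2 * S n)%nat with (S (2*n+1)) by lia.
    replace (S (2*n+1) + 1)%nat with (S (S (2*n+1))) by lia.
    rewrite !tech5, IH.
    replace (S (2*n+1)) with (2 * S n)%nat by lia.
    replace (S (2 * S n)) with (2 * S n + 1)%nat by lia.
    rewrite Hf, Hz. simpl. split; ring.
Qed.

Lemma sum_odd (f g : nat -> R) :
  (forall i, f (2*i)%nat = 0) -> (forall i, f (2*i+1)%nat = g i) ->
  forall n, sum_f_R0 f (2*n+1) = sum_f_R0 g n /\ sum_f_R0 f (2*n+2) = sum_f_R0 g n.
Proof.
  intros Hz Hf. induction n.
  - pose proof (Hf 0%nat); pose proof (Hz 0%nat); pose proof (Hz 1%nat). simpl in *. split; lra.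
  - destruct IHn as [_ IH].
    replace (2 * S n + 1)%nat with (S (2*n+2)) by lia.
    replace (2 * S n + 2)%nat with (S (S (2*n+2))) by lia.
    rewrite !tech5, IH.
    replace (S (2*n+2)) with (2 * S n + 1)%nat by lia.
    replace (S (2 * S n + 1)) with (2 * S (S n))%nat by lia.
    rewrite Hf, Hz. simpl. split; ring.
Qed.

Lemma cv_even (U T : nat -> R) l :
  (forall n, U (2*n)%nat = T n /\ U (2*n+1)%nat = T n) -> Un_cv T l -> Un_cv U l.
Proof.
  intros H HT eps He. destruct (HT eps He) as [N HN]. exists (2*N)%nat.
  intros n Hn. destruct (Nat.Even_or_Odd n) as [[m ->]|[m ->]].
  - rewrite (proj1 (H m)). apply HN. lia.
  - rewrite (proj2 (H m)). apply HN. lia.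
Qed.

Lemma cv_odd (U T : nat -> R) l :
  (forall n, U (2*n+1)%nat = T n /\ U (2*n+2)%nat = T n) -> Un_cv T l -> Un_cv U l.
Proof.
  intros H HT eps He. destruct (HT eps He) as [N HN]. exists (2*N+1)%nat.
  intros n Hn. destruct (Nat.Even_or_Odd n) as [[m ->]|[m ->]].
  - destruct m as [|m]; [lia|]. replace (2 * S m)%nat with (2*m+2)%nat by lia.
    rewrite (proj2 (H m)). apply HN. lia.
  - rewrite (proj1 (H m)). apply HN. lia.
Qed.

Lemma isum_ext f g l : (forall k, f k = g k) -> infinite_sum f l -> infinite_sum g l.
Proof.
  intros H Hf eps He. destruct (Hf eps He) as [N HN]. exists N. intros n Hn.
  rewrite <- (sum_eq f g n) by auto. auto.
Qed.

Lemma isum_plus f g a b : infinite_sum f a -> infinite_sum g b ->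
  infinite_sum (fun k => f k + g k) (a + b).
Proof.
  intros Hf Hg. intros eps He.
  assert (Hc : Un_cv (fun n => sum_f_R0 f n + sum_f_R0 g n) (a+b)) by (apply CV_plus; [exact Hf | exact Hg]).
  destruct (Hc eps He) as [N HN]. exists N. intros n Hn. rewrite plus_sum. apply HN; auto.
Qed.

Lemma isum_scal f a c : infinite_sum f a -> infinite_sum (fun k => c * f k) (c * a).
Proof.
  intros Hf eps He.
  assert (Hc : Un_cv (fun n => c * sum_f_R0 f n) (c*a)).
  { apply CV_mult; [intros e He'; exists 0%nat; intros; unfold Rdist; rewrite Rminus_diag, Rabs_R0; auto | exact Hf]. }
  destruct (Hc eps He) as [N HN]. exists N. intros n Hn.
  rewrite (sum_eq _ (fun k => f k * c)) by (intros; ring). rewrite <- scal_sum. apply HN; auto.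
Qed.

Lemma cos_ser x : infinite_sum (fun k => re_negi_pow k * x^k / INR (fact k)) (cos x).
Proof.
  unfold cos. destruct (exist_cos (Rsqr x)) as [l Hl]. unfold cos_in in Hl.
  apply (cv_even _ (sum_f_R0 (fun i => cos_n i * (Rsqr x)^i))); [|exact Hl].
  apply sum_even.
  - intros i. destruct (negi_par i) as [A _]. rewrite A. unfold cos_n, Rsqr.
    rewrite pow_mult. simpl (x^2). unfold Rdiv. rewrite Rmult_1_r. ring.
  - intros i. destruct (negi_par i) as [_ [A _]]. rewrite A. unfold Rdiv. ring.
Qed.

Lemma sin_ser x : infinite_sum (fun k => im_negi_pow k * x^k / INR (fact k)) (- sin x).
Proof.
  unfold sin. destruct (exist_sin (Rsqr x)) as [l Hl]. unfold sin_in in Hl.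
  replace (- (x * l)) with ((-x) * l) by ring.
  apply isum_scal with (c := -x) in Hl.
  apply (cv_odd _ (sum_f_R0 (fun i => -x * (sin_n i * (Rsqr x)^i)))); [|exact Hl].
  apply sum_odd.
  - intros i. destruct (negi_par i) as [_ [_ [A _]]]. rewrite A. unfold Rdiv. ring.
  - intros i. destruct (negi_par i) as [_ [_ [_ A]]]. rewrite A. unfold sin_n, Rsqr.
    assert (E : x^(2*i+1)%nat = x * (x*x)^i) by (rewrite pow_add, pow_mult; replace (x^2) with (x*x) by ring; ring).
    rewrite E. unfold Rdiv. ring.
Qed.

Definition Cf (m : bool) (n : nat) (x y : nat * nat) : R :=
  nf n * al m (fst x) * al m (fst y) * be n (snd x) * be n (snd y).

Definition Ssum (h : R -> R) (t : R) (x y : nat*nat) : R :=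
  Cf true 0 x y * h (t * lam true 0) + Cf true 1 x y * h (t * lam true 1) + Cf true 2 x y * h (t * lam true 2) +
  Cf false 0 x y * h (t * lam false 0) + Cf false 1 x y * h (t * lam false 1) + Cf false 2 x y * h (t * lam false 2).

Lemma ser_comb (r : nat -> R) (h : R -> R) t x y :
  (forall z, infinite_sum (fun k => r k * z^k / INR (fact k)) (h z)) ->
  In x (verts G) -> In y (verts G) ->
  infinite_sum (fun k => r k * t^k / INR (fact k) * apow G k x y) (Ssum h t x y).
Proof.
  intros Hh Hx Hy.
  eapply isum_ext.
  2:{ unfold Ssum.
      repeat apply isum_plus; apply isum_scal; apply Hh. }
  intros k. simpl. rewrite (apow_closed k x y Hx Hy). unfold F, trm, Cf.
  rewrite !Rpow_mult_distr. unfold Rdiv. ring.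
Qed.

Lemma H_gen t x y : In x (verts G) -> In y (verts G) ->
  H_entry G t x y (Ssum cos t x y) (Ssum (fun z => - sin z) t x y).
Proof.
  intros Hx Hy. split; apply ser_comb; auto.
  - apply cos_ser.
  - apply sin_ser.
Qed.

Lemma tneg1 t : t * -1 = - t. Proof. ring. Qed.

Lemma val1 t : Ssum cos t (1,1)%nat (1,3)%nat = cos t * (cos (t * s) - 1) / 2.
Proof.
  unfold Ssum, Cf, nf, al, be, lam; simpl.
  rewrite !Rmult_plus_distr_l, ?Rmult_1_r, ?tneg1, <- ?Ropp_mult_distr_r, ?Rmult_0_r.
  rewrite ?cos_plus, ?cos_neg, ?sin_neg, ?cos_0, ?sin_0. field.
Qed.

Ltac trigsimp := unfold Ssum, Cf, nf, al, be, lam; simpl;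
  rewrite !Rmult_plus_distr_l, ?Rmult_1_r, ?tneg1, <- ?Ropp_mult_distr_r, ?Rmult_0_r;
  rewrite ?cos_plus, ?sin_plus, ?cos_neg, ?sin_neg, ?cos_0, ?sin_0.

Lemma val1b t : Ssum (fun z => - sin z) t (1,1)%nat (1,3)%nat = 0.
Proof. trigsimp. field. Qed.
Lemma val2a t : Ssum cos t (1,1)%nat (2,1)%nat = 0.
Proof. trigsimp. field. Qed.
Lemma val2b t : Ssum (fun z => - sin z) t (1,1)%nat (2,1)%nat = - (sin t * (cos (t * s) + 1)) / 2.
Proof. trigsimp. field. Qed.

Lemma cos_lb z : 0 <= z <= PI/2 -> 1 - z^2/2 <= cos z.
Proof.
  intros [H1 H2]. destruct (cos_bound z 0 ltac:(lra) H2) as [A _].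
  unfold cos_approx, cos_term in A. simpl in A. lra.
Qed.

Lemma s_pos : 1 <= s.
Proof. pose proof s2. assert (0 <= s) by (unfold s; apply sqrt_pos). nra. Qed.

Lemma small_err d : 0 < d <= 1/2 -> (1 - cos (d * PI)) / 2 <= 2 * d.
Proof.
  intros Hd. pose proof PI_RGT_0. pose proof PI_4.
  assert (0 <= d*PI <= PI/2) by nra.
  pose proof (cos_lb _ H1). assert (d * PI <= 2) by nra. nra.
Qed.

Fixpoint pell1 (n : nat) : nat * nat :=
  match n with O => (1,1)%nat | S n => let (x,y) := pell1 n in (3*x+4*y, 2*x+3*y)%nat end.

Lemma pell1_prop n : let (x,y) := pell1 n in
  (x*x+1 = 2*y*y)%nat /\ (exists p, x = 2*p+1)%nat /\ (exists q, y = 2*q+1)%nat /\ (n+1 <= x)%nat.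
Proof.
  induction n; simpl.
  - repeat split; try lia. exists 0%nat; lia. exists 0%nat; lia.
  - destruct (pell1 n) as [x y]. destruct IHn as [E [[p Hp] [[q Hq] L]]].
    repeat split.
    + nia.
    + exists (3*p+4*q+3)%nat. lia.
    + exists (2*p+3*q+2)%nat. lia.
    + lia.
Qed.

Fixpoint pell2 (n : nat) : nat * nat :=
  match n with O => (3,1)%nat | S n => let (x,m) := pell2 n in (3*x+8*m, x+3*m)%nat end.

Lemma pell2_prop n : let (x,m) := pell2 n in
  (x*x = 8*m*m+1)%nat /\ (exists p, x = 2*p+1)%nat /\ (n+1 <= x)%nat.
Proof.
  induction n; simpl.
  - repeat split; try lia. exists 1%nat; lia.
  - destruct (pell2 n) as [x m]. destruct IHn as [E [[p Hp] L]].
    repeat split.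
    + nia.
    + exists (3*p+4*m+1)%nat. lia.
    + lia.
Qed.

Lemma INR_odd p : INR (2*p+1) = 2 * INR p + 1.
Proof. rewrite plus_INR, mult_INR. simpl. ring. Qed.

Lemma pick_n eps : eps > 0 -> exists n : nat, 2 / (INR n + 1) < eps /\ (1 <= n)%nat.
Proof.
  intros He. destruct (INR_unbounded (2/eps)) as [N HN].
  exists (S N). split; [|lia]. rewrite S_INR. pose proof (pos_INR N).
  apply Rmult_lt_reg_r with (INR N + 1 + 1); [lra|].
  unfold Rdiv in *. rewrite Rmult_assoc, Rinv_l by lra.
  apply Rmult_lt_compat_r with (r := eps) in HN; auto.
  rewrite Rmult_assoc, Rinv_l in HN by lra. nra.
Qed.

Lemma in_verts_11 : In (1,1)%nat (verts G). Proof. simpl; auto. Qed.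
Lemma in_verts_13 : In (1,3)%nat (verts G). Proof. simpl; auto 10. Qed.
Lemma in_verts_21 : In (2,1)%nat (verts G). Proof. simpl; auto 10. Qed.

Theorem pgst1 : PGST (cart (path_graph 2) (path_graph 3)) (1%nat, 1%nat) (1%nat, 3%nat).
Proof.
  intros eps He. destruct (pick_n eps He) as [n [Hn Hn1]].
  pose proof (pell1_prop n) as P. destruct (pell1 n) as [x y].
  destruct P as [E [[p Hp] [[q Hq] L]]].
  set (X := INR x). set (Y := INR y).
  assert (ER : X*X + 1 = 2*Y*Y).
  { pose proof (f_equal INR E) as E'. rewrite plus_INR, !mult_INR in E'.
    unfold X, Y. simpl in E'. lra. }
  assert (LX : INR n + 1 <= X). { unfold X. rewrite <- S_INR. apply le_INR. lia. }
  pose proof (pos_INR n). pose proof s2. pose proof s_pos.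
  assert (HY : 0 <= Y) by apply pos_INR.
  set (d := Y * s - X).
  assert (Ed : d * (Y*s + X) = 1) by (unfold d; nra).
  assert (Hd : 0 < d <= 1 / (INR n + 1)).
  { assert (HD : 0 <= Y * s) by nra.
    assert (d > 0). { destruct (Rle_or_lt d 0); [|lra]. assert (d * (Y*s+X) <= 0) by (rewrite <- (Rmult_0_l (Y*s+X)); apply Rmult_le_compat_r; lra). lra. }
    split. lra. apply Rmult_le_reg_r with (INR n + 1); [lra|].
    unfold Rdiv. rewrite Rmult_assoc, Rinv_l by lra.
    assert (d * (INR n + 1) <= d * (Y * s + X)) by (apply Rmult_le_compat_l; lra). lra. }
  exists (Y * PI), (cos (Y*PI) * (cos (Y*PI*s) - 1) / 2), 0.
  split.
  { rewrite <- (val1 (Y*PI)), <- (val1b (Y*PI)). apply H_gen; [apply in_verts_11|apply in_verts_13]. }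
  assert (C1 : cos (Y*PI) = -1).
  { unfold Y. rewrite Hq, INR_odd. replace ((2 * INR q + 1) * PI) with (PI + 2 * INR q * PI) by ring.
    rewrite cos_period. apply cos_PI. }
  assert (C2 : cos (Y*PI*s) = - cos (d * PI)).
  { replace (Y*PI*s) with (d * PI + PI + 2 * INR p * PI).
    - rewrite cos_period, neg_cos. reflexivity.
    - unfold d. replace (INR p) with ((X - 1)/2). field. unfold X. rewrite Hp, INR_odd. field. }
  rewrite C1, C2.
  assert (Hn2 : 1 / (INR n + 1) <= 1/2).
  { apply Rmult_le_reg_r with (2*(INR n + 1)); [lra|]. unfold Rdiv.
    replace (1 * / (INR n + 1) * (2 * (INR n + 1))) with 2 by (field; lra).
    replace (1 * / 2 * (2 * (INR n + 1))) with (INR n + 1) by field.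
    apply le_INR in Hn1. simpl in Hn1. lra. }
  pose proof (small_err d ltac:(lra)). pose proof (COS_bound (d*PI)).
  replace (-1 * (- cos (d * PI) - 1) / 2) with ((1 + cos (d*PI))/2) by field.
  replace (((1 + cos (d * PI)) / 2) ^ 2 + 0 ^ 2) with (((1 + cos (d * PI)) / 2) ^ 2) by ring.
  rewrite sqrt_pow2 by lra.
  assert (2 * d <= 2 / (INR n + 1)) by (unfold Rdiv in *; lra).
  rewrite Rabs_left1 by lra. lra.
Qed.

Theorem pgst2 : PGST (cart (path_graph 2) (path_graph 3)) (1%nat, 1%nat) (2%nat, 1%nat).
Proof.
  intros eps He. destruct (pick_n eps He) as [n [Hn Hn1]].
  pose proof (pell2_prop n) as P. destruct (pell2 n) as [x m].
  destruct P as [E [[p Hp] L]].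
  set (X := INR x). set (M := INR m).
  assert (ER : X*X = 8*M*M + 1).
  { pose proof (f_equal INR E) as E'. rewrite plus_INR, !mult_INR in E'.
    unfold X, M. simpl in E'. lra. }
  assert (LX : INR n + 1 <= X). { unfold X. rewrite <- S_INR. apply le_INR. lia. }
  pose proof (pos_INR n). pose proof s2. pose proof s_pos.
  assert (HM : 0 <= M) by apply pos_INR.
  set (d := X * s / 2 - 2 * M).
  assert (Ed : d * (X*s + 4*M) = 1) by (unfold d; nra).
  assert (Hd : 0 < d <= 1 / (INR n + 1)).
  { assert (HD : X <= X * s) by nra.
    assert (d > 0). { destruct (Rle_or_lt d 0); [|lra]. assert (d * (X*s+4*M) <= 0) by (rewrite <- (Rmult_0_l (X*s+4*M)); apply Rmult_le_compat_r; lra). lra. }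
    split. lra. apply Rmult_le_reg_r with (INR n + 1); [lra|].
    unfold Rdiv. rewrite Rmult_assoc, Rinv_l by lra.
    assert (d * (INR n + 1) <= d * (X * s + 4*M)) by (apply Rmult_le_compat_l; lra). lra. }
  set (t := X * PI / 2).
  exists t, 0, (- (sin t * (cos (t * s) + 1)) / 2).
  split.
  { rewrite <- (val2a t), <- (val2b t). apply H_gen; [apply in_verts_11|apply in_verts_21]. }
  assert (C1 : cos t = 0).
  { unfold t, X. rewrite Hp, INR_odd. replace ((2 * INR p + 1) * PI / 2) with (INR p * PI + PI/2) by field.
    rewrite cos_plus, cos_PI2, sin_PI2. rewrite sin_eq_0_1. ring. exists (Z.of_nat p). rewrite <- INR_IZR_INZ. reflexivity. }
  assert (S1 : sin t ^ 2 = 1).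
  { pose proof (sin2_cos2 t). rewrite C1 in H2. unfold Rsqr in H2. simpl. lra. }
  assert (C2 : cos (t*s) = cos (d * PI)).
  { replace (t*s) with (d * PI + 2 * INR m * PI).
    - rewrite cos_period. reflexivity.
    - unfold t, d, M. field. }
  rewrite C2.
  assert (Hn2 : 1 / (INR n + 1) <= 1/2).
  { apply Rmult_le_reg_r with (2*(INR n + 1)); [lra|]. unfold Rdiv.
    replace (1 * / (INR n + 1) * (2 * (INR n + 1))) with 2 by (field; lra).
    replace (1 * / 2 * (2 * (INR n + 1))) with (INR n + 1) by field.
    apply le_INR in Hn1. simpl in Hn1. lra. }
  pose proof (small_err d ltac:(lra)). pose proof (COS_bound (d*PI)).
  assert (EQ : 0 ^ 2 + (- (sin t * (cos (d * PI) + 1)) / 2) ^ 2 = ((1 + cos (d*PI))/2)^2).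
  { transitivity (sin t ^ 2 * ((cos (d * PI) + 1) / 2) ^ 2). field. rewrite S1. field. }
  rewrite EQ.
  rewrite sqrt_pow2 by lra.
  assert (2 * d <= 2 / (INR n + 1)) by (unfold Rdiv in *; lra).
  rewrite Rabs_left1 by lra. lra.
Qed.

Theorem mainTheorem6 :
  PGST (cart (path_graph 2) (path_graph 3)) (1%nat, 1%nat) (1%nat, 3%nat) /\
  PGST (cart (path_graph 2) (path_graph 3)) (1%nat, 1%nat) (2%nat, 1%nat) /\
  ((1%nat, 3%nat) <> (2%nat, 1%nat)).
Proof.
  split; [exact pgst1|]. split; [exact pgst2|]. intro H; inversion H.
Qed.
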